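(* Let $R$ be a ring and $n\in\{0,1,2,\dots\}\cup\{\infty\}$. Let $(h_1,h_2,h_3)$ be a morphism of distinguished triangles in the homotopy category $\boldsymbol{K}(R)$ from $X_1^\bullet\to X_2^\bullet\to X_3^\bullet\to X_1^\bullet[1]$ to $Y_1^\bullet\to Y_2^\bullet\to Y_3^\bullet\to Y_1^\bullet[1]$, where $h_k:X_k^\bullet\to Y_k^\bullet$. If $h_1$ and $h_2$ are $n$-quasi-isomorphisms, then $h_3$ is an $n$-quasi-isomorphism.
   Context: $R$ is an associative ring with identity; modules are left $R$-modules; $\infty+1=\infty$. For a positive integer $k$, $\mathcal{P}^{<k}$ is the class of modules $M$ admitting an exact sequence $0\to P_j\to\cdots\to P_0\to M\to 0$ with $j\le k-1$ and every $P_i$ finitely generated projective; $\mathcal{P}^{<\infty}$ is the class of modules admitting such a sequence for some finite $j$. A complex $Z^\bullet$ is $n$-exact if $\mathrm{Hom}_R(P,Z^\bullet)$ is exact for every $P\in\mathcal{P}^{<n+1}$. A cochain map $f$ is an $n$-quasi-isomorphism if its mapping cone is $n$-exact. *)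

(* Defs.v *)
From HB Require Import structures.
From mathcomp Require Import all_boot all_order all_algebra.
Set Implicit Arguments. Unset Strict Implicit. Unset Printing Implicit Defensive.
Import Order.TTheory GRing.Theory Num.Theory.
Local Open Scope ring_scope.

Section Defs.
Variable R : pzRingType.

Definition islin (A B : lmodType R) (f : A -> B) : Prop :=
  forall (a : R) (x y : A), f (a *: x + y) = a *: f x + f y.

Lemma islin0 {A B : lmodType R} {f : A -> B} : islin f -> f 0 = 0.
Proof.
move=> lf; have := lf 1 0 0; rewrite !scale1r addr0.
by move/(congr1 (fun v => v - f 0)); rewrite subrr addrK => h; rewrite -h.
Qed.

Lemma islinD {A B : lmodType R} {f : A -> B} {x y} : islin f -> f (x + y) = f x + f y.
Proof. by move=> lf; have := lf 1 x y; rewrite !scale1r. Qed.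

Lemma islinN {A B : lmodType R} {f : A -> B} {x} : islin f -> f (- x) = - f x.
Proof.
move=> lf; have := lf (-1) x 0; rewrite !addr0 (islin0 lf) addr0.
by rewrite !scaleN1r.
Qed.

Unset Implicit Arguments.
Record cx := Cx {
  cobj :> int -> lmodType R;
  cd : forall i : int, cobj i -> cobj (i + 1);
  cd_lin : forall i : int, islin (cd i);
  cd_dd : forall i x, cd (i + 1) (cd i x) = 0 }.

Record cmap (X Y : cx) := CMap {
  cm :> forall i, X i -> Y i;
  cm_lin : forall i : int, islin (cm i);
  cm_comm : forall i x, cm (i + 1) (cd X i x) = cd Y i (cm i x) }.

Set Implicit Arguments.
Arguments cm {X Y}.
Arguments cm_lin {X Y}.
Arguments cm_comm {X Y}.

Definition homotopic (X Y : cx) (f g : forall i, X i -> Y i) : Prop :=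
  exists s : forall i, X (i + 1) -> Y i,
    (forall i : int, islin (s i)) /\
    forall i (x : X (i + 1)),
      f (i + 1) x - g (i + 1) x = cd Y i (s i x) + s (i + 1) (cd X (i + 1) x).

Definition cmcomp (X Y Z : cx) (g : cmap Y Z) (f : cmap X Y) :
  forall i, X i -> Z i := fun i x => g i (f i x).

(* isomorphism in K(R): homotopy equivalence *)
Definition htpy_equiv (X Y : cx) (a : cmap X Y) : Prop :=
  exists b : cmap Y X,
    homotopic (cmcomp b a) (fun i x => x) /\ homotopic (cmcomp a b) (fun i x => x).

Definition shift_d (X : cx) (i : int) (x : X (i + 1)) : X (i + 1 + 1) :=
  - cd X (i + 1) x.

Lemma shift_lin (X : cx) i : islin (@shift_d X i).
Proof. by move=> a x y; rewrite /shift_d cd_lin opprD scalerN. Qed.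

Lemma shift_dd (X : cx) i x : @shift_d X (i + 1) (@shift_d X i x) = 0.
Proof. by rewrite /shift_d (islinN (cd_lin X _)) opprK cd_dd. Qed.

Definition shift (X : cx) : cx :=
  @Cx (fun i => X (i + 1)) (@shift_d X) (@shift_lin X) (@shift_dd X).

Definition shiftm (X Y : cx) (a : cmap X Y) : forall i, shift X i -> shift Y i :=
  fun i => a (i + 1).

Lemma scale_fst (A B : lmodType R) (a : R) (p : (A * B)%type) : (a *: p).1 = a *: p.1.
Proof. by []. Qed.
Lemma scale_snd (A B : lmodType R) (a : R) (p : (A * B)%type) : (a *: p).2 = a *: p.2.
Proof. by []. Qed.
Lemma add_fst (A B : lmodType R) (p q : (A * B)%type) : (p + q).1 = p.1 + q.1.
Proof. by []. Qed.
Lemma add_snd (A B : lmodType R) (p q : (A * B)%type) : (p + q).2 = p.2 + q.2.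
Proof. by []. Qed.

Section Cone.
Variables (X Y : cx) (f : cmap X Y).

Definition cone_obj (i : int) : lmodType R := (cobj X (i + 1) * cobj Y i)%type.

Definition cone_d (i : int) (p : cone_obj i) : cone_obj (i + 1) :=
  (- cd X (i + 1) p.1, f (i + 1) p.1 + cd Y i p.2).

Lemma cone_lin i : islin (@cone_d i).
Proof.
move=> a [x1 y1] [x2 y2]; rewrite /cone_d /=.
congr pair.
  by rewrite (cd_lin X) opprD -scalerN.
rewrite (cm_lin f) (cd_lin Y).
transitivity (a *: (f (i + 1) x1 + cd Y i y1) + (f (i + 1) x2 + cd Y i y2)); last by [].
rewrite scalerDr.
by rewrite -!addrA; congr (_ + _); rewrite [RHS]addrCA.
Qed.

Lemma cone_dd i p : @cone_d (i + 1) (@cone_d i p) = 0.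
Proof.
case: p => x y; rewrite /cone_d /=.
rewrite (islinN (cd_lin X _)) opprK cd_dd.
rewrite (islinN (cm_lin f _)) cm_comm (islinD (cd_lin Y _)) cd_dd addr0.
by rewrite addNr.
Qed.

Definition cone : cx := @Cx cone_obj cone_d cone_lin cone_dd.

Definition cone_in : forall i, Y i -> cone i := fun i y => (0, y).
Definition cone_out : forall i, cone i -> shift X i := fun i p => p.1.
End Cone.

Record tri := Tri {
  t1 : cx; t2 : cx; t3 : cx;
  tu : cmap t1 t2; tv : cmap t2 t3; tw : cmap t3 (shift t1) }.

(* distinguished triangles of K(R): isomorphic in K(R) to a standard
   cone triangle X -f-> Y -> C(f) -> X[1] *)
Definition distinguished (T : tri) : Prop :=
  exists (X Y : cx) (f : cmap X Y)
         (a : cmap (t1 T) X) (b : cmap (t2 T) Y) (c : cmap (t3 T) (cone f)),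
    [/\ htpy_equiv a, htpy_equiv b & htpy_equiv c] /\
    [/\ homotopic (cmcomp b (tu T)) (cmcomp f a),
        homotopic (cmcomp c (tv T)) (fun i x => cone_in f (b i x)) &
        homotopic (fun i x => shiftm a (tw T i x)) (fun i x => cone_out (c i x))].

Definition tri_morph (T T' : tri) (h1 : cmap (t1 T) (t1 T'))
  (h2 : cmap (t2 T) (t2 T')) (h3 : cmap (t3 T) (t3 T')) : Prop :=
  [/\ homotopic (cmcomp h2 (tu T)) (cmcomp (tu T') h1),
      homotopic (cmcomp h3 (tv T)) (cmcomp (tv T') h2) &
      homotopic (fun i x => shiftm h1 (tw T i x)) (cmcomp (tw T') h3)].

Definition fin_gen (M : lmodType R) : Prop :=
  exists (k : nat) (g : 'I_k -> M),
    forall m : M, exists c : 'I_k -> R, m = \sum_(i < k) c i *: g i.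

Definition projective (P : lmodType R) : Prop :=
  forall (A B : lmodType R) (p : A -> B) (f : P -> B),
    islin p -> islin f -> (forall b, exists a, p a = b) ->
    exists g : P -> A, islin g /\ forall x, p (g x) = f x.

Definition fgp_resolution (j : nat) (M : lmodType R) : Prop :=
  exists (P : nat -> lmodType R) (dP : forall i : nat, P i.+1 -> P i) (eps : P 0%N -> M),
    [/\ (forall i, islin (dP i)), islin eps,
        (forall i, fin_gen (P i) /\ projective (P i)),
        (forall i, (j < i)%N -> forall x : P i, x = 0) &
        [/\ (forall m, exists x, eps x = m),
            (forall x, eps (dP 0%N x) = 0),
            (forall x, eps x = 0 -> exists y, dP 0%N y = x),
            (forall i x, dP i (dP i.+1 x) = 0) &
            (forall i x, dP i x = 0 -> exists y, dP i.+1 y = x)]].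

(* k : option nat, None = infinity.  P^{<k} *)
Definition Pless (k : option nat) (M : lmodType R) : Prop :=
  exists j : nat, match k with Some k => (j <= k.-1)%N | None => True end
                  /\ fgp_resolution j M.

Definition hom_exact (P : lmodType R) (Z : cx) : Prop :=
  forall (i : int) (phi : P -> Z (i + 1)), islin phi ->
    (forall x, cd Z (i + 1) (phi x) = 0) ->
    exists psi : P -> Z i, islin psi /\ forall x, cd Z i (psi x) = phi x.

(* n : option nat, None = infinity; infinity + 1 = infinity *)
Definition n_exact (n : option nat) (Z : cx) : Prop :=
  forall P : lmodType R, Pless (omap S n) P -> hom_exact P Z.

Definition n_qiso (n : option nat) (X Y : cx) (f : cmap X Y) : Prop :=
  n_exact n (cone f).

End Defs.

Arguments cmap {R} X Y.
Arguments cm {R X Y}.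
Arguments cm_lin {R X Y}.
Arguments cm_comm {R X Y}.
Arguments cd {R}.

(* Main.v *)
From HB Require Import structures.
Require Import Defs.
From mathcomp Require Import all_boot all_order all_algebra.
Set Implicit Arguments. Unset Strict Implicit. Unset Printing Implicit Defensive.
Import GRing.Theory.
Local Open Scope ring_scope.

Lemma shift_ind (Pr : int -> Prop) : (forall i, Pr (i + 1)) -> forall i, Pr i.
Proof. by move=> H i; rewrite -(subrK 1 i); apply: H. Qed.

Section H.
Variable R : pzRingType.
Variable P : lmodType R.

Lemma islin_comp (A B C : lmodType R) (g : B -> C) (f : A -> B) :
  islin g -> islin f -> islin (fun x => g (f x)).
Proof. by move=> lg lf a x y; rewrite lf lg. Qed.

Lemma islin_zero (A B : lmodType R) : islin (fun _ : A => (0 : B)).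
Proof. by move=> a x y; rewrite scaler0 addr0. Qed.

Lemma islin_add (A B : lmodType R) (f g : A -> B) :
  islin f -> islin g -> islin (fun x => f x + g x).
Proof. by move=> lf lg a x y; rewrite lf lg scalerDr addrACA. Qed.

Lemma islin_opp (A B : lmodType R) (f : A -> B) :
  islin f -> islin (fun x => - f x).
Proof. by move=> lf a x y; rewrite lf opprD scalerN. Qed.

Lemma islin_sub (A B : lmodType R) (f g : A -> B) :
  islin f -> islin g -> islin (fun x => f x - g x).
Proof. by move=> lf lg; apply: islin_add => //; apply: islin_opp. Qed.

Lemma islin_pair (A B C : lmodType R) (f : A -> B) (g : A -> C) :
  islin f -> islin g -> islin (fun x => (f x, g x) : (B * C)%type).
Proof. by move=> lf lg a x y; rewrite lf lg. Qed.

Lemma islin_fst (A B C : lmodType R) (f : A -> (B * C)%type) :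
  islin f -> islin (fun x => (f x).1).
Proof. by move=> lf a x y; rewrite lf. Qed.

Lemma islin_snd (A B C : lmodType R) (f : A -> (B * C)%type) :
  islin f -> islin (fun x => (f x).2).
Proof. by move=> lf a x y; rewrite lf. Qed.

Lemma islinB (A B : lmodType R) (f : A -> B) x y : islin f -> f (x - y) = f x - f y.
Proof. by move=> lf; rewrite (islinD lf) (islinN lf). Qed.

Lemma pairE (A B : lmodType R) (p q : (A * B)%type) : p.1 = q.1 -> p.2 = q.2 -> p = q.
Proof. by case: p q => ? ? [? ?] /= -> ->. Qed.

Lemma add_eq0_opp (V : zmodType) (a b : V) : a + b = 0 -> - b = a.
Proof. by move/eqP; rewrite addr_eq0 => /eqP ->. Qed.

Lemma opp_eq0 (V : zmodType) (a : V) : - a = 0 -> a = 0.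
Proof. by move/eqP; rewrite oppr_eq0 => /eqP. Qed.

Definition Zc (X : cx R) (i : int) (phi : P -> X (i + 1)) : Prop :=
  islin phi /\ forall x, cd X (i + 1) (phi x) = 0.
Definition Bc (X : cx R) (i : int) (phi : P -> X (i + 1)) : Prop :=
  exists psi : P -> X i, islin psi /\ forall x, cd X i (psi x) = phi x.
Definition eqv (X : cx R) (i : int) (phi psi : P -> X (i + 1)) : Prop :=
  Bc (fun x => phi x - psi x).

Section Rel.
Variables (X : cx R) (i : int).
Implicit Types phi psi chi : P -> X (i + 1).

Lemma Bc_ext phi psi : (forall x, phi x = psi x) -> Bc phi -> Bc psi.
Proof. by move=> e [s [ls hs]]; exists s; split=> // x; rewrite hs e. Qed.

Lemma Bc0 : Bc (fun _ => 0 : X (i + 1)).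
Proof.
exists (fun _ => 0); split; first exact: islin_zero.
by move=> x /=; rewrite (islin0 (cd_lin _ X i)).
Qed.

Lemma BcD phi psi : Bc phi -> Bc psi -> Bc (fun x => phi x + psi x).
Proof.
move=> [s [ls hs]] [t [lt ht]]; exists (fun x => s x + t x); split.
  exact: islin_add.
by move=> x; rewrite (islinD (cd_lin _ X i)) hs ht.
Qed.

Lemma BcN phi : Bc phi -> Bc (fun x => - phi x).
Proof.
move=> [s [ls hs]]; exists (fun x => - s x); split; first exact: islin_opp.
by move=> x; rewrite (islinN (cd_lin _ X i)) hs.
Qed.

Lemma eqv_refl phi : eqv phi phi.
Proof. by apply: Bc_ext Bc0 => x; rewrite subrr. Qed.

Lemma eqv_sym phi psi : eqv phi psi -> eqv psi phi.
Proof. by move/BcN; apply: Bc_ext => x; rewrite opprB. Qed.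

Lemma eqv_trans phi chi psi : eqv phi chi -> eqv chi psi -> eqv phi psi.
Proof. by move=> h1 h2; have := BcD h1 h2; apply: Bc_ext => x; rewrite addrA subrK. Qed.

Lemma Bc_eqv phi psi : eqv phi psi -> Bc psi -> Bc phi.
Proof. by move=> e b; have := BcD e b; apply: Bc_ext => x; rewrite subrK. Qed.

Lemma eqv_Bc0 phi : Bc phi -> eqv phi (fun _ => 0).
Proof. by apply: Bc_ext => x; rewrite subr0. Qed.

Lemma eqvD phi phi' psi psi' : eqv phi phi' -> eqv psi psi' ->
  eqv (fun x => phi x + psi x) (fun x => phi' x + psi' x).
Proof. by move=> h1 h2; have := BcD h1 h2; apply: Bc_ext => x; rewrite opprD addrACA. Qed.

Lemma ZcD phi psi : Zc phi -> Zc psi -> Zc (fun x => phi x + psi x).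
Proof.
move=> [l1 c1] [l2 c2]; split; first exact: islin_add.
by move=> x; rewrite (islinD (cd_lin _ X _)) c1 c2 addr0.
Qed.

Lemma ZcB phi psi : Zc phi -> Zc psi -> Zc (fun x => phi x - psi x).
Proof.
move=> [l1 c1] [l2 c2]; split; first exact: islin_sub.
by move=> x; rewrite (islinB _ _ (cd_lin _ X _)) c1 c2 subr0.
Qed.
End Rel.


Notation act f phi := (fun x => f _ (phi x)).

Definition chainf (X Y : cx R) (f : forall i, X i -> Y i) : Prop :=
  (forall i, islin (f i)) /\ forall i x, f (i + 1) (cd X i x) = cd Y i (f i x).

Section Chain.
Variables (X Y : cx R) (f : forall i, X i -> Y i) (cf : chainf f) (i : int).

Lemma chainf_Z (phi : P -> X (i + 1)) : Zc phi -> Zc (act f phi).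
Proof.
case: cf => lf cc [lp cp]; split; first exact: islin_comp.
by move=> x; rewrite -cc cp (islin0 (lf _)).
Qed.

Lemma chainf_B (phi : P -> X (i + 1)) : Bc phi -> Bc (act f phi).
Proof.
case: cf => lf cc [s [ls hs]]; exists (act f s); split; first exact: islin_comp.
by move=> x; rewrite -cc hs.
Qed.

Lemma chainf_eqv (phi psi : P -> X (i + 1)) : eqv phi psi -> eqv (act f phi) (act f psi).
Proof.
move/chainf_B; apply: Bc_ext => x; case: cf => lf _.
by rewrite (islinB _ _ (lf _)).
Qed.

Lemma chainf_sub (phi psi : P -> X (i + 1)) (x : P) :
  @f (i + 1) (phi x - psi x) = @f (i + 1) (phi x) - @f (i + 1) (psi x).
Proof. by case: cf => lf _; rewrite (islinB _ _ (lf _)). Qed.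

Lemma chainf_add (phi psi : P -> X (i + 1)) (x : P) :
  @f (i + 1) (phi x + psi x) = @f (i + 1) (phi x) + @f (i + 1) (psi x).
Proof. by case: cf => lf _; rewrite (islinD (lf _)). Qed.
End Chain.

Lemma cmap_chainf (X Y : cx R) (f : cmap X Y) : chainf (cm f).
Proof. by split; [exact: cm_lin | exact: cm_comm]. Qed.

Definition cin (X Y : cx R) (f : cmap X Y) : forall i, Y i -> cone f i :=
  fun i y => cone_in f y.
Definition cout (X Y : cx R) (f : cmap X Y) : forall i, cone f i -> shift X i :=
  fun i p => @cone_out _ _ _ f i p.
Definition shm (X Y : cx R) (f : cmap X Y) : forall i, shift X i -> shift Y i :=
  fun i x => @shiftm _ _ _ f i x.
Arguments cin {X Y} f i _.
Arguments cout {X Y} f i _.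
Arguments shm {X Y} f i _.

Lemma cin_chainf (X Y : cx R) (f : cmap X Y) : chainf (cin f).
Proof.
split.
  move=> i a x y; apply: pairE => /=; first by rewrite scaler0 addr0.
  by [].
move=> i x; apply: pairE => /=; first by rewrite (islin0 (cd_lin _ X _)) oppr0.
by rewrite (islin0 (cm_lin f _)) add0r.
Qed.

Lemma cout_chainf (X Y : cx R) (f : cmap X Y) : chainf (cout f).
Proof. by split => // i a x y. Qed.

Lemma shm_chainf (X Y : cx R) (f : cmap X Y) : chainf (shm f).
Proof.
split; first by move=> i a x y; rewrite /shm /shiftm (cm_lin f).
by move=> i x; rewrite /shm /shiftm /= /shift_d (islinN (cm_lin f _)) cm_comm.
Qed.

Lemma hom_eqv (X Y : cx R) (f g : forall i, X i -> Y i) i (phi : P -> X (i + 1)) :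
  homotopic f g -> Zc phi -> eqv (act f phi) (act g phi).
Proof.
move=> [s [ls hs]] [lp cp]; exists (fun x => s i (phi x)); split.
  exact: islin_comp.
by move=> x; rewrite hs cp (islin0 (ls _)) addr0.
Qed.

Lemma Zc_shift (X : cx R) i (phi : P -> X (i + 1 + 1)) :
  @Zc (shift X) i phi <-> @Zc X (i + 1) phi.
Proof.
split=> [[l c]|[l c]]; split=> // x.
  by apply: opp_eq0; exact: (c x).
by rewrite /= /shift_d c oppr0.
Qed.

Lemma Bc_shift (X : cx R) i (phi : P -> X (i + 1 + 1)) :
  @Bc (shift X) i phi <-> @Bc X (i + 1) phi.
Proof.
split=> [[s [ls hs]]|[s [ls hs]]]; exists (fun x => - s x); split;
  try exact: islin_opp.
  by move=> x; rewrite (islinN (cd_lin _ X _)); exact: (hs x).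
by move=> x; rewrite /= /shift_d (islinN (cd_lin _ X _)) opprK hs.
Qed.

Lemma hom_eqv_sh (X Y : cx R) (f g : forall i, X i -> Y i) i (phi : P -> X (i + 1 + 1)) :
  homotopic f g -> @Zc (shift X) i phi ->
  @eqv (shift Y) i (fun x => f _ (phi x)) (fun x => g _ (phi x)).
Proof. by move=> h /Zc_shift z; apply/Bc_shift; exact: hom_eqv h z. Qed.


Section ConeL.
Variables (X Y : cx R) (f : cmap X Y).

Lemma cone_dE i (p : cone f i) :
  cd (cone f) i p = (- cd X (i + 1) p.1, f (i + 1) p.1 + cd Y i p.2).
Proof. by []. Qed.

Lemma cone_Z i (g : P -> cone f (i + 1)) : Zc g ->
  [/\ islin g, forall x, cd X (i + 1 + 1) (g x).1 = 0 &
     forall x, f (i + 1 + 1) (g x).1 + cd Y (i + 1) (g x).2 = 0].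
Proof.
move=> [l c]; split=> // x; have := c x; rewrite cone_dE.
  by move/(congr1 fst) => /= /opp_eq0.
by move/(congr1 snd).
Qed.

Lemma cone_ExB i (beta : P -> Y (i + 1)) : Zc beta -> Bc (act (cin f) beta) ->
  exists alpha : P -> X (i + 1), Zc alpha /\ eqv beta (act f alpha).
Proof.
move=> zb [s [ls hs]].
have h1 x : cd X (i + 1) (s x).1 = 0.
  by have := hs x; rewrite cone_dE => /(congr1 fst) /= /opp_eq0.
have h2 x : f (i + 1) (s x).1 + cd Y i (s x).2 = beta x.
  by have := hs x; rewrite cone_dE => /(congr1 snd).
exists (fun x => (s x).1); split; first by split=> //; exact: islin_fst.
exists (fun x => (s x).2); split; first exact: islin_snd.
by move=> x; rewrite -h2 (addrC (f _ _)) addrK.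
Qed.

Lemma cone_ExC i (g : P -> cone f (i + 1)) : Zc g ->
  @Bc (shift X) i (act (cout f) g) ->
  exists beta : P -> Y (i + 1), Zc beta /\ eqv g (act (cin f) beta).
Proof.
move=> /cone_Z [lg c1 c2] [s [ls hs]].
have hs' x : - cd X (i + 1) (s x) = (g x).1 by exact: hs x.
exists (fun x => (g x).2 - f (i + 1) (s x)); split.
  split; first by apply: islin_sub; [exact: islin_snd | exact: islin_comp (cm_lin f _) ls].
  move=> x; rewrite (islinB _ _ (cd_lin _ Y _)) -cm_comm.
  by rewrite -(opprK (cd X (i + 1) (s x))) hs' (islinN (cm_lin f _)) opprK (addrC (cd _ _ _)) c2.
exists (fun x => (s x, 0)); split.
  by apply: islin_pair => //; exact: islin_zero.
move=> x; rewrite cone_dE; apply: pairE => /=.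
  by rewrite hs' subr0.
by rewrite (islin0 (cd_lin _ Y _)) addr0 subKr.
Qed.

Lemma cone_ExA1 i (a : P -> X (i + 1 + 1)) : @Zc (shift X) i a ->
  @Bc (shift Y) i (act (shm f) a) ->
  exists g : P -> cone f (i + 1), Zc g /\ @eqv (shift X) i (act (cout f) g) a.
Proof.
move=> /Zc_shift [la ca] [s [ls hs]].
have hs' x : - cd Y (i + 1) (s x) = f (i + 1 + 1) (a x) by exact: hs x.
exists (fun x => (a x, s x)); split.
  split; first exact: islin_pair.
  move=> x; rewrite cone_dE; apply: pairE => /=.
    by rewrite ca oppr0.
  by rewrite -hs' addNr.
exact: eqv_refl.
Qed.

Lemma cone_Zvu i (alpha : P -> X (i + 1)) : Zc alpha ->
  Bc (act (cin f) (act f alpha)).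
Proof.
move=> [la ca]; exists (fun x => (alpha x, 0)); split.
  by apply: islin_pair => //; exact: islin_zero.
move=> x; rewrite cone_dE; apply: pairE => /=.
  by rewrite ca oppr0.
by rewrite (islin0 (cd_lin _ Y _)) addr0.
Qed.

Lemma cone_Zuw i (g : P -> cone f (i + 1)) : Zc g ->
  @Bc (shift Y) i (act (shm f) (act (cout f) g)).
Proof.
move=> /cone_Z [lg c1 c2]; exists (fun x => (g x).2); split.
  exact: islin_snd.
move=> x; exact: add_eq0_opp (c2 x).
Qed.
End ConeL.


Definition injH (X Y : cx R) (f : forall i, X i -> Y i) i :=
  forall phi : P -> X (i + 1), Zc phi -> Bc (act f phi) -> Bc phi.
Definition surjH (X Y : cx R) (f : forall i, X i -> Y i) i :=
  forall psi : P -> Y (i + 1), Zc psi ->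
    exists phi : P -> X (i + 1), Zc phi /\ eqv psi (act f phi).

Lemma htpy_sec (X Y : cx R) (a : cmap X Y) : htpy_equiv a ->
  exists a' : cmap Y X,
    (forall i (phi : P -> X (i + 1)), Zc phi -> eqv (act a' (act a phi)) phi) /\
    (forall i (psi : P -> Y (i + 1)), Zc psi -> eqv (act a (act a' psi)) psi).
Proof.
move=> [a' [h1 h2]]; exists a'; split=> i phi z.
  exact: hom_eqv h1 z.
exact: hom_eqv h2 z.
Qed.

Lemma htpy_inj (X Y : cx R) (a : cmap X Y) : htpy_equiv a -> forall i, injH (cm a) i.
Proof.
move=> /htpy_sec [a' [s1 s2]] i phi z b.
exact: Bc_eqv (eqv_sym (s1 _ _ z)) (chainf_B (cmap_chainf a') b).
Qed.

Lemma injH_shift (X Y : cx R) (f : cmap X Y) i : injH (cm f) (i + 1) -> injH (shm f) i.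
Proof. by move=> h phi /Zc_shift z /Bc_shift b; apply/Bc_shift; exact: h. Qed.

Lemma surjH_shift (X Y : cx R) (f : cmap X Y) i : surjH (cm f) (i + 1) -> surjH (shm f) i.
Proof.
move=> h psi /Zc_shift z; have [phi [z' e]] := h psi z.
by exists phi; split; [exact/Zc_shift | exact/Bc_shift].
Qed.

Lemma inj_eqv (X Y : cx R) (f : forall i, X i -> Y i) i (p q : P -> X (i + 1)) :
  chainf f -> injH f i -> Zc p -> Zc q -> eqv (act f p) (act f q) -> eqv p q.
Proof.
move=> cf h zp zq e; apply: h; first exact: ZcB.
by move: e; apply: Bc_ext => x; rewrite (chainf_sub cf).
Qed.

Section Tri.
Variable T : tri R.
Definition ExB := forall i (beta : P -> t2 T (i + 1)), Zc beta -> Bc (act (tv T) beta) ->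
  exists alpha : P -> t1 T (i + 1), Zc alpha /\ eqv beta (act (tu T) alpha).
Definition ExC := forall i (g : P -> t3 T (i + 1)), Zc g ->
  @Bc (shift (t1 T)) i (act (tw T) g) ->
  exists beta : P -> t2 T (i + 1), Zc beta /\ eqv g (act (tv T) beta).
Definition ExA1 := forall i (a : P -> t1 T (i + 1 + 1)), @Zc (shift (t1 T)) i a ->
  @Bc (shift (t2 T)) i (act (shm (tu T)) a) ->
  exists g : P -> t3 T (i + 1), Zc g /\ @eqv (shift (t1 T)) i (act (tw T) g) a.
Definition Zvu := forall i (a : P -> t1 T (i + 1)), Zc a -> Bc (act (tv T) (act (tu T) a)).
Definition Zuw := forall i (g : P -> t3 T (i + 1)), Zc g ->
  @Bc (shift (t2 T)) i (act (shm (tu T)) (act (tw T) g)).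
End Tri.

Lemma dist_Zvu T : distinguished T -> Zvu T.
Proof.
move=> [X [Y [f [a [b [c [[ea eb ec] [hu hv hw]]]]]]]] i al zal.
have zu := chainf_Z (cmap_chainf (tu T)) zal.
have zvu := chainf_Z (cmap_chainf (tv T)) zu.
have e1 : eqv (act c (act (tv T) (act (tu T) al)))
              (act (cin f) (act b (act (tu T) al))) := hom_eqv hv zu.
have e2 : eqv (act (cin f) (act b (act (tu T) al))) (act (cin f) (act f (act a al))).
  have e0 : eqv (act b (act (tu T) al)) (act f (act a al)) := hom_eqv hu zal.
  exact (chainf_eqv (cin_chainf f) e0).
have b3 := cone_Zvu f (chainf_Z (cmap_chainf a) zal).
exact (htpy_inj ec zvu (Bc_eqv (eqv_trans e1 e2) b3)).
Qed.


Lemma dist_Zuw T : distinguished T -> Zuw T.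
Proof.
move=> [X [Y [f [a [b [c [[ea eb ec] [hu hv hw]]]]]]]] i g zg.
have zw : @Zc (shift (t1 T)) i (act (tw T) g) := chainf_Z (cmap_chainf (tw T)) zg.
have zuw := chainf_Z (shm_chainf (tu T)) zw.
have e1 : @eqv (shift Y) i (act (shm b) (act (shm (tu T)) (act (tw T) g)))
   (act (shm f) (act (shm a) (act (tw T) g))) := hom_eqv_sh hu zw.
have e2 : @eqv (shift X) i (act (shm a) (act (tw T) g)) (act (cout f) (act c g))
   := hom_eqv hw zg.
have e3 : @eqv (shift Y) i (act (shm f) (act (shm a) (act (tw T) g)))
   (act (shm f) (act (cout f) (act c g))) := chainf_eqv (shm_chainf f) e2.
have b4 := cone_Zuw (chainf_Z (cmap_chainf c) zg).
exact (injH_shift (htpy_inj eb (i:=i + 1)) zuw (Bc_eqv (eqv_trans e1 e3) b4)).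
Qed.

Lemma dist_ExB T : distinguished T -> ExB T.
Proof.
move=> [X [Y [f [a [b [c [[ea eb ec] [hu hv hw]]]]]]]] i be zbe hb.
have zbb := chainf_Z (cmap_chainf b) zbe.
have b1 : Bc (act (cin f) (act b be)).
  have e : eqv (act c (act (tv T) be)) (act (cin f) (act b be)) := hom_eqv hv zbe.
  exact (Bc_eqv (eqv_sym e) (chainf_B (cmap_chainf c) hb)).
have [al0 [zal0 e0]] := cone_ExB zbb b1.
have [a' [sa1 sa2]] := htpy_sec ea.
have zal := chainf_Z (cmap_chainf a') zal0.
exists (act a' al0); split => //.
have zua := chainf_Z (cmap_chainf (tu T)) zal.
have e2 : eqv (act f (act a (act a' al0))) (act f al0)
  := chainf_eqv (cmap_chainf f) (sa2 _ _ zal0).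
have e3 : eqv (act b (act (tu T) (act a' al0))) (act f (act a (act a' al0)))
  := hom_eqv hu zal.
exact (inj_eqv (cmap_chainf b) (htpy_inj eb (i:=i)) zbe zua
        (eqv_trans e0 (eqv_sym (eqv_trans e3 e2)))).
Qed.

Lemma dist_ExC T : distinguished T -> ExC T.
Proof.
move=> [X [Y [f [a [b [c [[ea eb ec] [hu hv hw]]]]]]]] i g zg hwg.
have zc := chainf_Z (cmap_chainf c) zg.
have b1 : @Bc (shift X) i (act (cout f) (act c g)).
  have e : @eqv (shift X) i (act (shm a) (act (tw T) g)) (act (cout f) (act c g))
    := hom_eqv hw zg.
  exact (Bc_eqv (eqv_sym e) (chainf_B (shm_chainf a) hwg)).
have [be0 [zbe0 e0]] := cone_ExC zc b1.
have [b' [sb1 sb2]] := htpy_sec eb.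
have zbe := chainf_Z (cmap_chainf b') zbe0.
exists (act b' be0); split => //.
have zv := chainf_Z (cmap_chainf (tv T)) zbe.
have e2 : eqv (act (cin f) (act b (act b' be0))) (act (cin f) be0)
  := chainf_eqv (cin_chainf f) (sb2 _ _ zbe0).
have e3 : eqv (act c (act (tv T) (act b' be0))) (act (cin f) (act b (act b' be0)))
  := hom_eqv hv zbe.
exact (inj_eqv (cmap_chainf c) (htpy_inj ec (i:=i)) zg zv
        (eqv_trans e0 (eqv_sym (eqv_trans e3 e2)))).
Qed.

Lemma dist_ExA1 T : distinguished T -> ExA1 T.
Proof.
move=> [X [Y [f [a [b [c [[ea eb ec] [hu hv hw]]]]]]]] i a1 za hua.
have zaa := chainf_Z (shm_chainf a) za.
have b1 : @Bc (shift Y) i (act (shm f) (act (shm a) a1)).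
  have e : @eqv (shift Y) i (act (shm b) (act (shm (tu T)) a1))
     (act (shm f) (act (shm a) a1)) := hom_eqv_sh hu za.
  exact (Bc_eqv (eqv_sym e) (chainf_B (shm_chainf b) hua)).
have [g0 [zg0 e0]] := cone_ExA1 zaa b1.
have [c' [sc1 sc2]] := htpy_sec ec.
have zg := chainf_Z (cmap_chainf c') zg0.
exists (act c' g0); split => //.
have zw : @Zc (shift (t1 T)) i (act (tw T) (act c' g0)) := chainf_Z (cmap_chainf (tw T)) zg.
have e1 : @eqv (shift X) i (act (shm a) (act (tw T) (act c' g0)))
   (act (cout f) (act c (act c' g0))) := hom_eqv hw zg.
have e2 : @eqv (shift X) i (act (cout f) (act c (act c' g0))) (act (cout f) g0)
  := chainf_eqv (cout_chainf f) (sc2 _ _ zg0).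
exact (inj_eqv (shm_chainf a) (injH_shift (htpy_inj ea (i:=i + 1))) zw za
        (eqv_trans e1 (eqv_trans e2 e0))).
Qed.


Lemma mix1 (V : zmodType) (a b c : V) : (a + b) + ((c - a) - b) = c.
Proof. by rewrite addrACA subrr addr0 addrCA subrr addr0. Qed.

Section Five.
Variables (T T' : tri R) (h1 : cmap (t1 T) (t1 T')) (h2 : cmap (t2 T) (t2 T'))
  (h3 : cmap (t3 T) (t3 T')).
Hypothesis hm : tri_morph h1 h2 h3.

Lemma five_inj i : ExC T -> Zvu T -> ExB T' ->
  injH (shm h1) i -> surjH (cm h1) i -> injH (cm h2) i -> injH (cm h3) i.
Proof.
case: hm => m1 m2 m3 exC zvu exB' inj1 surj1 inj2 g zg hb.
have zw : @Zc (shift (t1 T)) i (act (tw T) g) := chainf_Z (cmap_chainf (tw T)) zg.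
have E1 : @eqv (shift (t1 T')) i (act (shm h1) (act (tw T) g)) (act (tw T') (act h3 g))
  := hom_eqv m3 zg.
have B1 := Bc_eqv E1 (chainf_B (cmap_chainf (tw T')) hb).
have bw := inj1 _ zw B1.
have [be [zbe eg]] := exC i g zg bw.
have zh2b := chainf_Z (cmap_chainf h2) zbe.
have E2 : eqv (act h3 (act (tv T) be)) (act (tv T') (act h2 be)) := hom_eqv m2 zbe.
have E3 : eqv (act h3 g) (act h3 (act (tv T) be)) := chainf_eqv (cmap_chainf h3) eg.
have B2 := Bc_eqv (eqv_sym (eqv_trans E3 E2)) hb.
have [al' [zal' eal']] := exB' i _ zh2b B2.
have [al [zal eal]] := surj1 al' zal'.
have zua := chainf_Z (cmap_chainf (tu T)) zal.
have E4 : eqv (act h2 (act (tu T) al)) (act (tu T') (act h1 al)) := hom_eqv m1 zal.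
have E5 : eqv (act (tu T') al') (act (tu T') (act h1 al))
  := chainf_eqv (cmap_chainf (tu T')) eal.
have E6 := inj_eqv (cmap_chainf h2) inj2 zbe zua (eqv_trans eal' (eqv_trans E5 (eqv_sym E4))).
have E7 : eqv (act (tv T) be) (act (tv T) (act (tu T) al)) := chainf_eqv (cmap_chainf (tv T)) E6.
exact (Bc_eqv (eqv_trans eg E7) (zvu i al zal)).
Qed.

Lemma five_surj i : ExA1 T -> ExC T' -> Zuw T' ->
  surjH (shm h1) i -> injH (shm h2) i -> surjH (cm h2) i -> surjH (cm h3) i.
Proof.
case: hm => m1 m2 m3 exA1 exC' zuw' surj1 inj2 surj2 g' zg'.
have zw' : @Zc (shift (t1 T')) i (act (tw T') g') := chainf_Z (cmap_chainf (tw T')) zg'.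
have [a [za ea]] := surj1 _ zw'.
have zua := chainf_Z (shm_chainf (tu T)) za.
have E1 : @eqv (shift (t2 T')) i (act (shm h2) (act (shm (tu T)) a))
   (act (shm (tu T')) (act (shm h1) a)) := hom_eqv_sh m1 za.
have E2 : @eqv (shift (t2 T')) i (act (shm (tu T')) (act (tw T') g'))
   (act (shm (tu T')) (act (shm h1) a)) := chainf_eqv (shm_chainf (tu T')) ea.
have B1 := zuw' i g' zg'.
have B2 := Bc_eqv (eqv_trans E1 (eqv_sym E2)) B1.
have bua := inj2 _ zua B2.
have [g0 [zg0 eg0]] := exA1 i a za bua.
have zh3 := chainf_Z (cmap_chainf h3) zg0.
have zg'' := ZcB zg' zh3.
have E3 : @eqv (shift (t1 T')) i (act (shm h1) (act (tw T) g0)) (act (tw T') (act h3 g0))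
  := hom_eqv m3 zg0.
have E4 : @eqv (shift (t1 T')) i (act (shm h1) (act (tw T) g0)) (act (shm h1) a)
  := chainf_eqv (shm_chainf h1) eg0.
have E5 := eqv_trans ea (eqv_trans (eqv_sym E4) E3).
have B3 : @Bc (shift (t1 T')) i (act (tw T') (fun x => g' x - h3 _ (g0 x))).
  move: E5; apply: Bc_ext => x /=.
  by rewrite (islinB _ _ (cm_lin (tw T') _)).
have [be' [zbe' ebe']] := exC' i _ zg'' B3.
have [be [zbe ebe]] := surj2 _ zbe'.
have zv := chainf_Z (cmap_chainf (tv T)) zbe.
exists (fun x => g0 x + tv T _ (be x)); split; first exact: ZcD.
have E6 : eqv (act h3 (act (tv T) be)) (act (tv T') (act h2 be)) := hom_eqv m2 zbe.
have E7 : eqv (act (tv T') be') (act (tv T') (act h2 be))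
  := chainf_eqv (cmap_chainf (tv T')) ebe.
have E8 := eqv_trans ebe' (eqv_trans E7 (eqv_sym E6)).
have E9 := eqvD (eqv_refl (act h3 g0)) E8.
move: E9; apply: Bc_ext => x /=.
rewrite (islinD (cm_lin h3 _)); congr (_ - _).
by rewrite addrCA subrr addr0.
Qed.
End Five.

Lemma qiso_inj (X Y : cx R) (f : cmap X Y) : hom_exact P (cone f) -> forall i, injH (cm f) i.
Proof.
move=> he; apply: (@shift_ind (fun j => injH (cm f) j)) => i phi [lp cp] [s [ls hs]].
have [|c [lc hc]] := he i (fun x => (phi x, - s x)) (islin_pair lp (islin_opp ls)).
  move=> x; rewrite cone_dE; apply: pairE => /=.
    by rewrite cp oppr0.
  by rewrite (islinN (cd_lin _ Y _)) hs subrr.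
exists (fun x => - (c x).1); split; first exact/islin_opp/islin_fst.
move=> x; rewrite (islinN (cd_lin _ X _)).
by have := hc x; rewrite cone_dE => /(congr1 fst).
Qed.

Lemma qiso_surj (X Y : cx R) (f : cmap X Y) : hom_exact P (cone f) -> forall i, surjH (cm f) i.
Proof.
move=> he i psi [lp cp].
have [|c [lc hc]] := he i (fun x => (0, psi x)) (islin_pair (@islin_zero P (X (i + 1 + 1))) lp).
  move=> x; rewrite cone_dE; apply: pairE => /=.
    by rewrite (islin0 (cd_lin _ X _)) oppr0.
  by rewrite (islin0 (cm_lin f _)) add0r cp.
have h1 x : cd X (i + 1) (c x).1 = 0.
  by have := hc x; rewrite cone_dE => /(congr1 fst) /= /opp_eq0.
have h2 x : f (i + 1) (c x).1 + cd Y i (c x).2 = psi x.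
  by have := hc x; rewrite cone_dE => /(congr1 snd).
exists (fun x => (c x).1); split; first by split=> //; exact: islin_fst.
exists (fun x => (c x).2); split; first exact: islin_snd.
by move=> x; rewrite -h2 (addrC (f _ _)) addrK.
Qed.

Lemma inj_surj_qiso (X Y : cx R) (f : cmap X Y) :
  (forall i, injH (cm f) i) -> (forall i, surjH (cm f) i) -> hom_exact P (cone f).
Proof.
move=> hi hs i g lg cg.
have [_ c1 c2] := @cone_Z _ _ f i g (conj lg cg).
have zg1 : @Zc X (i + 1) (fun x => (g x).1) by split=> //; exact: islin_fst.
have bg1 : @Bc Y (i + 1) (act f (fun x => (g x).1)).
  exists (fun x => - (g x).2); split; first exact/islin_opp/islin_snd.
  by move=> x; rewrite (islinN (cd_lin _ Y _)); exact: add_eq0_opp (c2 x).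
have [t [lt ht]] := hi (i + 1) _ zg1 bg1.
pose r := fun x => (g x).2 - f (i + 1) (- t x).
have zr : @Zc Y i r.
  split; first by apply: islin_sub; [exact: islin_snd | exact: islin_comp (cm_lin f _) (islin_opp lt)].
  move=> x; rewrite /r (islinB _ _ (cd_lin _ Y _)) -cm_comm (islinN (cd_lin _ X _)) ht.
  by rewrite (islinN (cm_lin f _)) opprK (addrC (cd _ _ _)) c2.
have [al [[la ca] [chi [lchi hchi]]]] := hs i r zr.
exists (fun x => (- t x + al x, chi x)); split.
  by apply: islin_pair => //; apply: islin_add => //; exact: islin_opp.
move=> x; rewrite cone_dE; apply: pairE => /=.
  by rewrite (islinD (cd_lin _ X _)) (islinN (cd_lin _ X _)) ht ca addr0 opprK.
by rewrite hchi (islinD (cm_lin f _)) /r mix1.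
Qed.

Lemma main_P (T T' : tri R) (h1 : cmap (t1 T) (t1 T')) (h2 : cmap (t2 T) (t2 T'))
  (h3 : cmap (t3 T) (t3 T')) :
  distinguished T -> distinguished T' -> tri_morph h1 h2 h3 ->
  hom_exact P (cone h1) -> hom_exact P (cone h2) -> hom_exact P (cone h3).
Proof.
move=> dT dT' hm e1 e2; apply: inj_surj_qiso => i.
  apply: (five_inj hm (dist_ExC dT) (dist_Zvu dT) (dist_ExB dT')).
  - exact (injH_shift (qiso_inj e1 (i:=i + 1))).
  - exact (qiso_surj e1 (i:=i)).
  - exact (qiso_inj e2 (i:=i)).
apply: (five_surj hm (dist_ExA1 dT) (dist_ExC dT') (dist_Zuw dT')).
- exact (surjH_shift (qiso_surj e1 (i:=i + 1))).
- exact (injH_shift (qiso_inj e2 (i:=i + 1))).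
- exact (qiso_surj e2 (i:=i)).
Qed.

End H.

Theorem corollary4p7 (R : pzRingType) (n : option nat) (T T' : tri R)
  (h1 : cmap (t1 T) (t1 T')) (h2 : cmap (t2 T) (t2 T')) (h3 : cmap (t3 T) (t3 T')) :
  distinguished T -> distinguished T' -> tri_morph h1 h2 h3 ->
  n_qiso n h1 -> n_qiso n h2 -> n_qiso n h3.
Proof.
move=> dT dT' hm q1 q2 P HP.
exact: (main_P dT dT' hm (q1 P HP) (q2 P HP)).
Qed.
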